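(* Let $0<p<1$, $q=1-p$, let $\{X_i,i\geq 1\}$ be independent with $P\{X_i=1\}=p$, $P\{X_i=0\}=q$, and let $K,m\in\mathbb N$. Then $$P\big(M_{2K}^{(m)}\geq K-1\big)=\begin{cases}(K+2)(pq)^{K/2}-2(pq)^K, & \text{if } K \text{ is even},\\ (K+1-2Kpq)(pq)^{\frac{K-1}{2}}-(1-2pq)(pq)^{K-1}, & \text{if } K \text{ is odd}.\end{cases}$$
   Context: For $m,n\in\mathbb N$ let $S_n^{(m)}:=\sum_{i=m+1}^{n+m-1}\big[(1-X_{i-1})X_i+X_{i-1}(1-X_i)\big]$ be the number of switches among $X_m,\ldots,X_{m+n-1}$. For $m,N\in\mathbb N$ and $n=1,\ldots,N$ let $H_{m,n}^{(N)}:=\bigcup_{i=m}^{m+N-n+1}\{S_n^{(i)}=n-1\}$, and $M_N^{(m)}:=\max_{1\leq n\leq N}\{n-1 : H_{m,n}^{(N)}\neq\emptyset\}$ (length of the longest consecutive switches in $X_m,\ldots,X_{m+N-1}$). *)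

(* Defs.v *)
From HB Require Import structures.
From mathcomp Require Import all_boot all_order all_algebra.
From mathcomp Require Import all_classical all_reals all_analysis.
Set Implicit Arguments. Unset Strict Implicit. Unset Printing Implicit Defensive.
Import Order.TTheory GRing.Theory Num.Theory.
Local Open Scope classical_set_scope.
Local Open Scope ring_scope.

Definition mutually_independent d (T : measurableType d) (R : realType)
  (P : probability T R) (X : nat -> {RV P >-> R}) (I : set nat) : Prop :=
  forall (s : seq nat) (B : nat -> set R),
    uniq s -> (forall i, i \in s -> I i) -> (forall i, measurable (B i)) ->
    P (\big[setI/setT]_(i <- s) (X i @^-1` B i)) =
    (\prod_(i <- s) P (X i @^-1` B i))%E.

Definition switches (T : Type) (R : realType) (X : nat -> T -> R)
  (m n : nat) (t : T) : R :=
  \sum_(m.+1 <= i < n + m) ((1 - X i.-1 t) * X i t + X i.-1 t * (1 - X i t)).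

(* t \in H_{m,n}^{(N)}: some window X_i..X_{i+n-1}, m <= i <= m+N-n, consists
   entirely of switches (S_n^{(i)} = n-1). *)
Definition Hwin (T : Type) (R : realType) (X : nat -> T -> R)
  (m n N : nat) (t : T) : bool :=
  has (fun i => switches X i n t == (n - 1)%:R) (iota m (N - n + 1)).

(* M_N^{(m)}(t) = max_{1<=n<=N} { n-1 : t \in H_{m,n}^{(N)} } *)
Definition Mlong (T : Type) (R : realType) (X : nat -> T -> R)
  (m N : nat) (t : T) : nat :=
  \max_(1 <= n < N.+1 | Hwin X m n N t) (n - 1).

(* Main.v *)
Require Import Defs.
From HB Require Import structures.
From mathcomp Require Import all_boot all_order all_algebra.
From mathcomp Require Import all_classical all_reals all_analysis.
From mathcomp Require Import measurable_realfun.
From mathcomp Require Import ring lra zify.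
Set Implicit Arguments. Unset Strict Implicit. Unset Printing Implicit Defensive.
Import Order.TTheory GRing.Theory Num.Theory.
Local Open Scope classical_set_scope.
Local Open Scope ring_scope.

Section CombS.
Variable R : realType.
Variables p q : R.
Hypothesis hq : q = 1 - p.
Variable N : nat.

Definition wt (b : bool) : R := if b then p else q.
Definition wa (w : {ffun 'I_N -> bool}) (j : nat) : bool :=
  if insub j is Some o then w o else false.
Definition muN (g : (nat -> bool) -> R) : R :=
  \sum_(w : {ffun 'I_N -> bool}) g (wa w) * \prod_(j : 'I_N) wt (w j).
Definition cyl a b (v : nat -> bool) (u : nat -> bool) :=
  all (fun j => u j == v j) (index_iota a b).

Lemma waE w (j : 'I_N) : wa w j = w j.
Proof. by rewrite /wa valK. Qed.

Lemma natr_all (P : nat -> bool) s :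
  (all P s)%:R = \prod_(j <- s) ((P j)%:R : R).
Proof.
elim: s => [|x s IH]; first by rewrite big_nil.
by rewrite big_cons /= -IH; case: (P x); rewrite ?mul1r ?mul0r.
Qed.

Lemma prod_widen (G : nat -> R) a b : (b <= N)%N ->
  \prod_(a <= j < b) G j = \prod_(j < N | (a <= j < b)%N) G j.
Proof.
move=> bN; rewrite (big_nat_widen a b N) // (big_nat_widenl a 0) //.
rewrite big_mkord; apply: eq_bigl => j /=; by rewrite andbC.
Qed.

Lemma muN_cyl a b v : (b <= N)%N ->
  muN (fun u => (cyl a b v u)%:R) = \prod_(a <= j < b) wt (v j).
Proof.
move=> bN.
pose F (j : 'I_N) (x : bool) :=
  (if (a <= j < b)%N then ((x == v j)%:R : R) else 1) * wt x.
have E1 : forall w : {ffun 'I_N -> bool},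
  (cyl a b v (wa w))%:R * \prod_(j : 'I_N) wt (w j) = \prod_(j : 'I_N) F j (w j).
  move=> w; rewrite /F big_split /=; congr (_ * _).
  rewrite /cyl natr_all prod_widen // -big_mkcond /=.
  by apply: eq_bigr => j _; rewrite waE.
rewrite /muN (eq_bigr _ (fun w _ => E1 w)) -bigA_distr_bigA /=.
rewrite prod_widen // [RHS]big_mkcond /=.
apply: eq_bigr => j _; rewrite big_bool /F /=.
case: ifP => _; first by case: (v j); rewrite /= ?mul1r ?mul0r ?addr0 ?add0r.
by rewrite /wt !mul1r hq addrC subrK.
Qed.

Section Bool.
Local Open Scope nat_scope.

Definition alt (u : nat -> bool) i n :=
  all (fun k => u (i+k) != u (i+k).+1) (iota 0 n.-1).
Definition vx (x : bool) i j := x (+) odd (j - i).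
Definition v2 K (x : bool) j :=
  if (j < K)%N then x (+) odd (K.-1 - j) else x (+) odd (j - K).
Definition good K u := has (fun i => alt u i K) (iota 0 K.+1).

Lemma altP u i n :
  reflect (forall k, (k < n.-1)%N -> u (i+k) != u (i+k).+1) (alt u i n).
Proof.
apply: (iffP allP) => H k.
  by move=> hk; apply: H; rewrite mem_iota.
by rewrite mem_iota => /andP[_ hk]; apply: H.
Qed.

Lemma cylP a b v u :
  reflect (forall j, (a <= j < b)%N -> u j = v j) (cyl a b v u).
Proof.
apply: (iffP allP) => H j.
  by move=> hj; apply/eqP; apply: H; rewrite mem_index_iota.
by rewrite mem_index_iota => hj; apply/eqP; apply: H.
Qed.

Lemma cyl_shift u i n x :
  cyl i (i+n) (vx x i) u = all (fun k => u (i+k) == x (+) odd k) (iota 0 n).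
Proof.
rewrite /cyl /index_iota addKn.
have -> : iota i n = map (addn i) (iota 0 n) by rewrite -iotaDl addn0.
by rewrite all_map; apply: eq_all => k /=; rewrite /vx addKn.
Qed.

Lemma alt_all u i n :
  alt u i n.+1 = all (fun k => u (i+k) == u i (+) odd k) (iota 0 n.+1).
Proof.
elim: n => [|n IH]; first by rewrite /alt /= addn0 addbF eqxx.
have E : forall n, iota 0 n.+1 = iota 0 n ++ [:: n].
  by move=> m; rewrite -addn1 iotaD.
rewrite /alt (_ : n.+2.-1 = n.+1) // (E n) all_cat all_seq1.
rewrite -[all _ (iota 0 n)]/(alt u i n.+1) IH.
rewrite (E n.+1) all_cat all_seq1 (E n) all_cat all_seq1 -!andbA.
congr (_ && _).
case: eqP => [->|] //=.
rewrite addnS.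
by case: (u i); case: (odd n); case: (u (i + n).+1).
Qed.

Lemma alt_cyl u i n : alt u i n.+1 = cyl i (i+n.+1) (vx (u i) i) u.
Proof. by rewrite cyl_shift alt_all. Qed.

Lemma cyl_j0 a b v u j0 : (a <= j0 < b)%N -> cyl a b v u -> u j0 = v j0.
Proof. by move=> hj /cylP; apply. Qed.

Lemma term_i u K i : (1 <= i <= K)%N ->
  alt u i K && ~~ has (fun j => alt u j K) (iota 0 i) =
  cyl i.-1 (i+K) (vx (u i) i) u && ((i < K)%N || ~~ alt u 0 K).
Proof.
case/andP=> i1 iK.
have Ec : forall x, cyl i.-1 (i+K) (vx x i) u =
    (u i.-1 == x) && cyl i (i+K) (vx x i) u.
  move=> x; rewrite /cyl /index_iota.
  have -> : i + K - i.-1 = (i + K - i).+1 by lia.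
  rewrite /= prednK // /vx (_ : i.-1 - i = 0) ?addbF //; lia.
case: K iK Ec => [|K] iK Ec; first lia.
rewrite Ec -alt_cyl.
case A: (alt u i K.+1); rewrite ?andbF //= andbT.
case E: (u i.-1 == u i) => /=.
  have -> : has (fun j => alt u j K.+1) (iota 0 i) = (K.+1 <= i) && alt u 0 K.+1.
    apply/hasP/andP.
      move=> [j]; rewrite mem_iota => /andP[_ ji] Aj.
      case: (boolP ((j == 0) && (K.+1 <= i))) => [/andP[/eqP j0 ->]|H].
        by rewrite -j0.
      exfalso; move: H; rewrite negb_and -ltnNge => H.
      move/altP: Aj => /(_ (i.-1 - j)).
      have -> : j + (i.-1 - j) = i.-1 by lia.
      rewrite prednK // E => h.
      suff hh : i.-1 - j < K.+1.-1 by have := h hh.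
      rewrite add0n in ji.
      case/orP: H => H; [have : 0 < j by rewrite lt0n| idtac]; lia.
    by case=> h0 A0; exists 0 => //; rewrite mem_iota.
  by rewrite negb_and -ltnNge.
apply/negP => /negP/hasPn /(_ i.-1); rewrite mem_iota.
have -> : 0 <= i.-1 < 0 + i by lia.
move/(_ isT)/negP; apply; apply/altP => k hk.
case: k hk => [|k] hk.
  by rewrite addn0 prednK // E.
move/altP: A => /(_ k); rewrite (_ : i.-1 + k.+1 = i + k); [|lia].
apply; lia.
Qed.

Lemma v2_cyl u K : (1 <= K)%N ->
  cyl 0 (K+K) (v2 K (u K)) u =
  cyl K.-1 (K+K) (vx (u K) K) u && alt u 0 K.
Proof.
case: K => [|K] _ //.
rewrite alt_all; apply/idP/andP.
  move/cylP => H; split.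
    apply/cylP => j hj; rewrite H; last lia.
    rewrite /v2 /vx; case: ltnP => hjK.
      have -> : j = K by lia.
      by rewrite subnn (_ : K - K.+1 = 0) //; lia.
    done.
  apply/allP => k; rewrite mem_iota => /andP[_ hk].
  rewrite add0n in hk; rewrite add0n [u k]H; last lia.
  rewrite [u 0]H; last lia.
  rewrite /v2 hk /= subn0 oddB; last lia.
  by case: (u K.+1); case: (odd K); case: (odd k).
case=> /cylP H /allP A; apply/cylP => j hj.
rewrite /v2; case: ltnP => hjK; last by rewrite H //; lia.
have e0 : K - K.+1 = 0 by lia.
have hK := H K; rewrite /vx e0 /= addbF in hK.
have aj := A j; rewrite mem_iota add0n in aj.
move: (aj hjK) => /eqP ->.
have aK := A K; rewrite mem_iota !add0n in aK.
have := aK (leqnn _); rewrite hK; last lia.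
move/eqP => ->; rewrite oddB; last lia.
by case: (u 0); case: (odd K); case: (odd j).
Qed.

End Bool.

Lemma sum_collapse (v : bool -> nat -> bool) a b j0 u :
  (a <= j0 < b)%N -> (forall x, v x j0 = x) ->
  \sum_(x : bool) ((cyl a b (v x) u)%:R : R) = (cyl a b (v (u j0)) u)%:R.
Proof.
move=> hj hv.
have H : forall x, cyl a b (v x) u -> u j0 = x.
  by move=> x /(cyl_j0 hj) ->; rewrite hv.
rewrite big_bool /=; case E: (u j0).
  have -> : cyl a b (v false) u = false by apply/negP => /H; rewrite E.
  by rewrite addr0.
have -> : cyl a b (v true) u = false by apply/negP => /H; rewrite E.
by rewrite add0r.
Qed.

Lemma has_first (P : nat -> bool) n :
  ((has P (iota 0 n))%:R : R) =
  \sum_(0 <= i < n) ((P i && ~~ has P (iota 0 i))%:R).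
Proof.
elim: n => [|n IH]; first by rewrite big_geq.
rewrite big_nat_recr // -IH -addn1 iotaD has_cat /= orbF.
by case: (has P (iota 0 n)); case: (P n); rewrite /= ?addr0 ?add0r.
Qed.

Lemma good_decomp u K : (1 <= K)%N ->
  ((good K u)%:R : R) =
  \sum_(x : bool) ((cyl 0 K (vx x 0) u)%:R : R)
  + \sum_(1 <= i < K) \sum_(x : bool) ((cyl i.-1 (i+K) (vx x i) u)%:R : R)
  + (\sum_(x : bool) ((cyl K.-1 (K+K) (vx x K) u)%:R : R)
     - \sum_(x : bool) ((cyl 0 (K+K) (v2 K x) u)%:R : R)).
Proof.
move=> K1.
rewrite /good has_first big_ltn // big_nat_recr //=.
rewrite andbT -addrA; congr (_ + _).
  case: K K1 => [|K] // _.
  by rewrite alt_cyl add0n (sum_collapse (j0 := 0)) // => x; rewrite /vx addbF.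
congr (_ + _).
  apply: eq_big_nat => i /andP[i1 iK].
  rewrite term_i; last by rewrite i1 ltnW.
  rewrite iK andbT (sum_collapse (j0 := i)) //.
    lia.
  by move=> x; rewrite /vx subnn addbF.
rewrite term_i; last by rewrite K1 leqnn.
rewrite ltnn /= (sum_collapse (j0 := K)); first last.
- by move=> x; rewrite /vx subnn addbF.
- lia.
rewrite (sum_collapse (j0 := K)); first last.
- by move=> x; rewrite /v2 ltnn subnn addbF.
- lia.
rewrite v2_cyl //.
by case: (cyl _ _ _ u); case: (alt u 0 K); rewrite /= ?subr0 ?subrr.
Qed.

Lemma muN_ext g1 g2 : (forall u, g1 u = g2 u) -> muN g1 = muN g2.
Proof. by move=> H; apply: eq_bigr => w _; rewrite H. Qed.

Lemma muN_add g1 g2 : muN (fun u => g1 u + g2 u) = muN g1 + muN g2.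
Proof. by rewrite /muN -big_split; apply: eq_bigr => w _; rewrite mulrDl. Qed.

Lemma muN_sub g1 g2 : muN (fun u => g1 u - g2 u) = muN g1 - muN g2.
Proof. by rewrite /muN -sumrB; apply: eq_bigr => w _; rewrite mulrBl. Qed.

Lemma muN_sum (I : Type) (s : seq I) (P : pred I) g :
  muN (fun u => \sum_(i <- s | P i) g i u) = \sum_(i <- s | P i) muN (g i).
Proof.
rewrite /muN exchange_big /=; apply: eq_bigr => w _; by rewrite mulr_suml.
Qed.

Definition Qn n x := \prod_(0 <= j < n) wt (x (+) odd j).

Lemma prod_shift (F : nat -> R) a n :
  \prod_(a <= j < (a + n)%N) F (j - a)%N = \prod_(0 <= j < n) F j.
Proof.
rewrite (big_addn 0 (a+n)%N a) addKn.
by apply: eq_big_nat => j _; rewrite addnK.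
Qed.

Lemma Qn_closed n x :
  Qn n x = (p * q) ^+ (n./2) * (if odd n then wt x else 1).
Proof.
elim: n => [|n IH]; first by rewrite /Qn big_geq // expr0 mulr1.
rewrite /Qn big_nat_recr // -/(Qn n x) IH; clear IH.
have -> : n.+1./2 = (odd n + n./2)%N by rewrite -uphalf_half.
rewrite [odd n.+1]/=.
case: (odd n); rewrite ?add0n ?add1n ?exprS /=;
  case: x; rewrite /wt /= ?addbT ?addbF; ring.
Qed.

Lemma prod_cyl_i x i K : (1 <= i)%N ->
  \prod_(i.-1 <= j < (i + K)%N) wt (vx x i j) = wt x * Qn K x.
Proof.
move=> i1; rewrite big_ltn; last lia.
rewrite prednK // /vx (_ : (i.-1 - i = 0)%N); last lia.
rewrite addbF; congr (_ * _).
by rewrite (prod_shift (fun j => wt (x (+) odd j))).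
Qed.

Lemma prod_v2 x K :
  \prod_(0 <= j < (K + K)%N) wt (v2 K x j) = Qn K x * Qn K x.
Proof.
rewrite (big_cat_nat _ (n := K)) //; last lia.
congr (_ * _).
  rewrite big_nat_rev /Qn.
  apply: eq_big_nat => j /andP[_ hj].
  rewrite /v2 add0n (_ : (K - j.+1 < K)%N); last lia.
  by rewrite (_ : (K.-1 - (K - j.+1) = j)%N) //; lia.
rewrite /Qn -(prod_shift (fun j => wt (x (+) odd j)) K K) /=.
apply: eq_big_nat => j /andP[hj _].
by rewrite /v2 ltnNge hj.
Qed.

Lemma final_alg K : (1 <= K)%N ->
  \sum_(x : bool) Qn K x + (\sum_(x : bool) (wt x * Qn K x)) *+ (K - 1)
  + (\sum_(x : bool) (wt x * Qn K x) - \sum_(x : bool) (Qn K x * Qn K x)) =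
  (if odd K then
     (K.+1%:R - 2 * K%:R * p * q) * (p * q) ^+ ((K - 1)./2)
       - (1 - 2 * p * q) * (p * q) ^+ (K - 1)
   else
     (K.+2)%:R * (p * q) ^+ (K./2) - 2 * (p * q) ^+ K).
Proof.
move=> K1.
rewrite !big_bool /= !Qn_closed.
have hK := odd_double_half K.
move: hK; set h := K./2; case: (odd K) => /= hK; rewrite -hK.
  rewrite addKn doubleK -mulr_natr -!natr1 -addnn !natrD exprD.
  rewrite /wt /= hq; ring.
- rewrite add0n.
  have h1 : (0 < h)%N by move: K1; rewrite -hK -addnn; lia.
  rewrite -mulr_natr natrB; last by rewrite -addnn; lia.
  rewrite -!natr1 -addnn !natrD exprD /wt /= hq; ring.
Qed.

Lemma muN_good K : (1 <= K)%N -> N = (K + K)%N ->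
  muN (fun u => (good K u)%:R) =
  (if odd K then
     (K.+1%:R - 2 * K%:R * p * q) * (p * q) ^+ ((K - 1)./2)
       - (1 - 2 * p * q) * (p * q) ^+ (K - 1)
   else
     (K.+2)%:R * (p * q) ^+ (K./2) - 2 * (p * q) ^+ K).
Proof.
move=> K1 hN.
rewrite -final_alg // (muN_ext (fun u => good_decomp u K1)).
rewrite muN_add muN_sub muN_add !muN_sum.
have Ti : forall x i, (1 <= i <= K)%N ->
    muN (fun u => (cyl i.-1 (i+K) (vx x i) u)%:R) = wt x * Qn K x.
  move=> x i /andP[i1 iK]; rewrite muN_cyl ?prod_cyl_i //; lia.
congr (_ + _ + (_ - _)).
- apply: eq_bigr => x _; rewrite muN_cyl; last lia.
  by apply: eq_bigr => j _; rewrite /vx subn0.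
- rewrite -sumr_const_nat; apply: eq_big_nat => i hi.
  rewrite muN_sum; apply: eq_bigr => x _; apply: Ti; lia.
- by apply: eq_bigr => x _; rewrite -{1}(prednK K1) Ti ?prednK //; lia.
- apply: eq_bigr => x _; rewrite muN_cyl ?prod_v2 //; lia.
Qed.

End CombS.

Lemma bigI_mem (T : Type) (I : eqType) (s : seq I) (A : I -> set T) t :
  (\big[setI/setT]_(i <- s) A i) t <-> (forall i, i \in s -> A i t).
Proof.
elim: s => [|x s IH]; first by rewrite big_nil; split.
rewrite big_cons; split.
  by case=> Ax /IH H i; rewrite in_cons => /orP [/eqP ->|]; [exact: Ax| exact: H].
move=> H; split; first by apply: H; rewrite in_cons eqxx.
by apply/IH => i hi; apply: H; rewrite in_cons hi orbT.
Qed.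

Lemma bigU_mem (T : Type) (I : eqType) (s : seq I) (A : I -> set T) t :
  (\big[setU/set0]_(i <- s) A i) t <-> (exists i, i \in s /\ A i t).
Proof.
elim: s => [|x s IH]; first by rewrite big_nil; split => [[]|[i []]].
rewrite big_cons; split.
  case=> [Ax|/IH [i [hi Ai]]]; first by exists x; rewrite in_cons eqxx.
  by exists i; rewrite in_cons hi orbT.
case=> i []; rewrite in_cons => /orP [/eqP ->|hi] Ai; first by left.
by right; apply/IH; exists i.
Qed.

Lemma natr_sum_bool (R : realType) (I : Type) (s : seq I) (b : I -> bool) :
  \sum_(i <- s) ((b i)%:R : R) = (count b s)%:R.
Proof.
elim: s => [|x s IH]; first by rewrite big_nil.
by rewrite big_cons IH /= natrD.
Qed.

Lemma max_geq (a b k : nat) (Pn : nat -> bool) (F : nat -> nat) :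
  (k <= \max_(a <= n < b | Pn n) F n)%N =
  (k == 0)%N || has (fun n => Pn n && (k <= F n)%N) (index_iota a b).
Proof.
elim: (index_iota a b) => [|x s IH]; first by rewrite big_nil leqn0 orbF.
rewrite big_cons /=; case: (Pn x) => /=.
  by rewrite leq_max IH; case: (k == 0)%N; rewrite ?orbT //= orbC.
by rewrite IH.
Qed.

Lemma word_good (u : nat -> bool) K N : (1 <= K)%N -> N = (K + K)%N ->
  (K - 1 == 0)%N ||
  has (fun n => has (fun i => alt u i n) (iota 0 (N - n + 1)) && (K - 1 <= n - 1)%N)
      (index_iota 1 N.+1) = good K u.
Proof.
move=> K1 hN.
case: (boolP (K - 1 == 0)%N) => [/eqP K0|K0] /=.
  have -> : K = 1%N by lia.
  by apply/esym/hasP; exists 0%N.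
have K2 : (2 <= K)%N by move: K0; rewrite subn_eq0 -ltnNge.
apply/hasP/hasP.
  case=> n; rewrite mem_index_iota => hn /andP[/hasP [i hi Ai] hK].
  rewrite mem_iota in hi.
  exists i; first by rewrite mem_iota; lia.
  apply/altP => k hk; move/altP: Ai; apply; lia.
case=> i; rewrite mem_iota => hi Ai; exists K.
  by rewrite mem_index_iota; lia.
rewrite leqnn andbT; apply/hasP; exists i => //.
by rewrite mem_iota; lia.
Qed.

Lemma mset_has d (T : measurableType d) (A : Type) (s : seq A) (Q : A -> T -> bool) :
  (forall a, measurable [set t | Q a t]) ->
  measurable [set t | has (fun a => Q a t) s].
Proof.
move=> mQ; elim: s => [|x s IH] /=.
  by rewrite (_ : [set t | false] = set0) //; apply/seteqP; split.
rewrite (_ : [set t | Q x t || _] = [set t | Q x t] `|` [set t | has (fun a => Q a t) s]).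
  exact: measurableU.
by apply/seteqP; split => t /=; [move/orP | move=> /orP].
Qed.

Lemma mfun_sum d (T : measurableType d) (R : realType) (s : seq nat) (g : nat -> T -> R) :
  (forall j, measurable_fun setT (g j)) ->
  measurable_fun setT (fun t => \sum_(j <- s) g j t).
Proof.
move=> mg; elim: s => [|x s IH].
  rewrite (_ : (fun t => _) = cst 0); first exact: measurable_cst.
  by apply/funext => t; rewrite big_nil.
rewrite (_ : (fun t => _) = g x \+ (fun t => \sum_(j <- s) g j t)).
  exact: measurable_funD.
by apply/funext => t; rewrite big_cons.
Qed.

Lemma meas_eq d (T : measurableType d) (R : realType) (f : T -> R) c :
  measurable_fun setT f -> measurable [set t | f t == c].
Proof.
move=> mf; rewrite (_ : [set t | f t == c] = f @^-1` [set c]).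
  by rewrite -[f @^-1` _]setTI; apply: mf => //; exact: measurable_set1.
by apply/seteqP; split => t /= /eqP.
Qed.

Section MeasS.
Variables (d : measure_display) (T : measurableType d) (R : realType)
  (P : probability T R) (X : nat -> {RV P >-> R}) (p q : R).
Hypothesis hq : q = 1 - p.
Hypothesis hX1 : forall i, (1 <= i)%N -> P (X i @^-1` [set 1]) = p%:E.
Hypothesis hX0 : forall i, (1 <= i)%N -> P (X i @^-1` [set 0]) = q%:E.
Hypothesis hind : mutually_independent X [set i | (1 <= i)%N].
Variables (m N : nat).
Hypothesis hm : (1 <= m)%N.

Definition bv (b : bool) : R := if b then 1 else 0.
Definition Cw (w : {ffun 'I_N -> bool}) : set T :=
  \big[setI/setT]_(i <- map (addn m) (iota 0 N))
     (X i @^-1` [set bv (wa w (i - m))]).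

Lemma Cw_mem w t :
  Cw w t <-> forall j, (j < N)%N -> X (m + j) t = bv (wa w j).
Proof.
rewrite /Cw bigI_mem; split => H.
  move=> j hj; have := H (m + j)%N; rewrite addKn; apply.
  by apply: map_f; rewrite mem_iota.
move=> i /mapP [j]; rewrite mem_iota => /andP[_ hj] ->.
by rewrite /= addKn; apply: H.
Qed.

Lemma Cw_meas w : measurable (Cw w).
Proof.
apply: bigsetI_measurable => i _.
by apply: measurable_funPTI; exact: measurable_set1.
Qed.

Lemma PCw w : P (Cw w) = (\prod_(j : 'I_N) wt p q (w j))%:E.
Proof.
have H := @hind (map (addn m) (iota 0 N)) (fun i => [set bv (wa w (i - m))]).
rewrite /Cw H; first last.
- by move=> i; exact: measurable_set1.
- by move=> i /mapP [j _ ->] /=; lia.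
- by rewrite map_inj_uniq ?iota_uniq //; exact: addnI.
rewrite big_map (eq_bigr (fun j => (wt p q (wa w j))%:E)); last first.
  move=> j _; rewrite addKn /wt /bv; case: (wa w j).
  - by apply: hX1; lia.
  - by apply: hX0; lia.
rewrite prodEFin; congr EFin.
have -> : iota 0 N = index_iota 0 N by rewrite /index_iota subn0.
by rewrite big_mkord; apply: eq_bigr => j _; rewrite waE.
Qed.

Lemma Cw_disj w w' : w != w' -> Cw w `&` Cw w' = set0.
Proof.
move=> neq; apply/seteqP; split => [t [/Cw_mem H1 /Cw_mem H2]|//].
apply: (negP neq); apply/eqP/ffunP => j.
have := H1 j (ltn_ord j); rewrite H2 ?ltn_ord // !waE /bv.
case: (w j); case: (w' j) => //= /eqP; rewrite ?oner_eq0 // eq_sym oner_eq0 //.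
Qed.

Lemma PU s : uniq s ->
  P (\big[setU/set0]_(w <- s) Cw w) = (\sum_(w <- s) P (Cw w))%E.
Proof.
elim: s => [|x s IH] /=; first by rewrite !big_nil measure0.
case/andP => xs us; rewrite !big_cons measureU -?(IH us) //.
- exact: Cw_meas.
- by apply: bigsetU_measurable => w _; exact: Cw_meas.
apply/seteqP; split => // t [Cx /bigU_mem [w [ws Cw']]].
have nxw : x != w by apply: contraNneq xs => ->.
have : (Cw x `&` Cw w) t by split.
by rewrite Cw_disj.
Qed.

Definition G := \big[setU/set0]_(w <- index_enum {ffun 'I_N -> bool}) Cw w.

Lemma PG : P G = 1%E.
Proof.
rewrite /G PU ?index_enum_uniq // (eq_bigr _ (fun w _ => PCw w)) sumEFin.
congr EFin.
have := @muN_cyl R p q hq N 0 0 (fun _ => true) (leq0n N).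
rewrite big_geq // => H; apply: etrans H.
by apply: eq_bigr => w _; rewrite /= mul1r.
Qed.

Lemma P_event (F : set T) (gf : (nat -> bool) -> bool) :
  measurable F -> (forall w t, Cw w t -> (F t <-> gf (wa w))) ->
  P F = (muN p q N (fun u => (gf u)%:R))%:E.
Proof.
move=> mF HF.
have mG : measurable G by apply: bigsetU_measurable => w _; exact: Cw_meas.
have E1 : F = (F `&` G) `|` (F `&` ~` G) by rewrite -setIUr setUv setIT.
rewrite E1 measureU; first last.
- by apply/seteqP; split => // t [[_ ?] [_ ?]].
- by apply: measurableI => //; exact: measurableC.
- exact: measurableI.
have Z : P (F `&` ~` G) = 0%E.
  apply/eqP; rewrite -measure_le0.
  apply: (@le_trans _ _ (P (~` G))).
    apply: le_measure; rewrite ?inE //=;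
      try (by apply: measurableI => //; exact: measurableC);
      try exact: measurableC; by move=> t [].
  by rewrite probability_setC // PG subee.
rewrite -[RHS]adde0; congr (_ + _); last exact: Z.
have E2 : F `&` G =
    \big[setU/set0]_(w <- [seq w <- index_enum {ffun 'I_N -> bool} | gf (wa w)]) Cw w.
  apply/seteqP; split => t.
  - case=> Ft /bigU_mem [w [ws Cwt]]; apply/bigU_mem; exists w; split => //.
    by rewrite mem_filter ws andbT; apply/(HF w t Cwt).
  - move/bigU_mem => [w [ws Cwt]]; move: ws; rewrite mem_filter => /andP [gw ws].
    split; first by apply/(HF w t Cwt).
    by apply/bigU_mem; exists w.
have U : uniq [seq w <- index_enum {ffun 'I_N -> bool} | gf (wa w)].
  by rewrite filter_uniq // index_enum_uniq.
rewrite E2; apply: etrans (PU U) _.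
rewrite big_filter big_mkcond /= /muN -sumEFin.
apply: eq_bigr => w _; rewrite PCw.
by case: (gf (wa w)); rewrite /= ?mul1r ?mul0r.
Qed.

Lemma switch_term a b : (1 - bv a) * bv b + bv a * (1 - bv b) = ((a != b)%:R : R).
Proof.
by case: a; case: b; rewrite /bv /= ?subrr ?subr0 ?mulr0 ?mul0r ?mulr1 ?mul1r ?addr0 ?add0r.
Qed.

Lemma Hwin_word w t n : Cw w t -> (1 <= n <= N)%N ->
  Hwin (fun i => X i) m n N t = has (fun i => alt (wa w) i n) (iota 0 (N - n + 1)).
Proof.
move/Cw_mem => H /andP[n1 nN].
rewrite /Hwin (_ : iota m _ = map (addn m) (iota 0 (N - n + 1))); last first.
  by rewrite -iotaDl addn0.
rewrite has_map; apply: eq_in_has => i; rewrite mem_iota => /andP[_ hi] /=.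
rewrite /switches (big_addn 0 _ (m + i).+1).
have -> : (n + (m + i) - (m + i).+1 = n.-1)%N by lia.
rewrite (eq_big_nat _ _ (F2 := fun k => ((wa w (i + k) != wa w (i + k).+1)%:R : R))); last first.
  move=> k /andP[_ hk].
  have -> : (k + (m + i).+1).-1 = (m + (i + k))%N by lia.
  have -> : (k + (m + i).+1)%N = (m + (i + k).+1)%N by lia.
  by rewrite !H ?switch_term //; lia.
rewrite natr_sum_bool subn1 eqr_nat /alt /index_iota subn0.
by rewrite all_count size_iota.
Qed.

Lemma meas_F K : measurable [set t | (K - 1 <= Mlong (fun i => X i) m N t)%N].
Proof.
rewrite (_ : [set t | _] = [set t | (K - 1 == 0)%N || has (fun n =>
    Hwin (fun i => X i) m n N t && (K - 1 <= n - 1)%N) (index_iota 1 N.+1)]); last first.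
  by apply/seteqP; split => t /=; rewrite /Mlong max_geq.
case: (K - 1 == 0)%N => /=.
  by rewrite (_ : [set t | true] = setT) //; apply/seteqP; split.
apply: mset_has => n; case: (K - 1 <= n - 1)%N; last first.
  rewrite (_ : [set t | _ && false] = set0) //.
  by apply/seteqP; split => t //=; rewrite andbF.
rewrite (_ : [set t | _ && true] = [set t | Hwin (fun i => X i) m n N t]); last first.
  by apply/seteqP; split => t /=; rewrite andbT.
apply: mset_has => i; apply: meas_eq; apply: mfun_sum => j.
apply: measurable_funD; apply: measurable_funM.
- by apply: measurable_funB => //; exact: measurable_cst.
- exact: measurable_funP.
- exact: measurable_funP.
- by apply: measurable_funB => //; exact: measurable_cst.
Qed.

End MeasS.

Theorem lemma3p2 (d : measure_display) (T : measurableType d) (R : realType)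
  (P : probability T R) (X : nat -> {RV P >-> R}) (p q : R)
  (hp0 : 0 < p) (hp1 : p < 1) (hq : q = 1 - p)
  (hX1 : forall i, (1 <= i)%N -> P (X i @^-1` [set 1]) = p%:E)
  (hX0 : forall i, (1 <= i)%N -> P (X i @^-1` [set 0]) = q%:E)
  (hind : mutually_independent X [set i | (1 <= i)%N])
  (K m : nat) (hK : (1 <= K)%N) (hm : (1 <= m)%N) :
  P [set t | (K - 1 <= Mlong (fun i => X i) m (2 * K) t)%N] =
  (if odd K then
     (K.+1%:R - 2 * K%:R * p * q) * (p * q) ^+ ((K - 1)./2)
       - (1 - 2 * p * q) * (p * q) ^+ (K - 1)
   else
     (K.+2)%:R * (p * q) ^+ (K./2) - 2 * (p * q) ^+ K)%:E.
Proof.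
have K2 : (2 * K = K + K)%N by rewrite mul2n addnn.
rewrite -(muN_good hq hK K2).
apply: (P_event hq hX1 hX0 hind hm); first exact: meas_F.
move=> w t Cwt /=; split => H.
- rewrite /Mlong max_geq in H.
  rewrite -(word_good (wa w) hK K2); move: H; congr (is_true (_ || _)).
  apply: eq_in_has => n; rewrite mem_index_iota => hn.
  by rewrite (Hwin_word hm Cwt) //.
- rewrite /Mlong max_geq.
  rewrite -(word_good (wa w) hK K2) in H; move: H; congr (is_true (_ || _)).
  apply: eq_in_has => n; rewrite mem_index_iota => hn.
  by rewrite (Hwin_word hm Cwt) //.
Qed.
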